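(* Let $p$ be an odd prime, let $n$ be a positive integer with $\gcd(n,p)=1$, let $k\ge1$, and set $m=np^k$ and $K=\mathbb{Q}(\zeta_n)$. Let $f:\mathbb{F}_p\to\mathbb{C}$ satisfy $f(0)=0$, $f(x)$ an $m$-th root of unity for all $x\ne0$, and $$\sum_{x\in\mathbb{F}_p} f(x)\overline{f(x+h)}=\begin{cases}-1 & \text{if } h\neq 0,\\ p-1 & \text{if } h=0.\end{cases}$$ Then there is no integer $s$ such that $\zeta_{p^k}^s\,G(f,\psi)\in K$.
   Context: $\zeta_r=e^{2\pi i/r}$, $\psi(x)=e^{2\pi i x/p}$, and $G(f,\psi)=\sum_{x=0}^{p-1}f(x)\psi(x)$. *)

(* Defs.v *)
From HB Require Import structures.
From mathcomp Require Import all_boot all_order all_algebra all_field.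
Set Implicit Arguments. Unset Strict Implicit. Unset Printing Implicit Defensive.
Import Order.TTheory GRing.Theory Num.Theory.
Local Open Scope ring_scope.

(* Complex numbers are modelled by algC (algebraic complex numbers): all the
   quantities involved (roots of unity, Gauss sums) are algebraic. *)

(* zeta r = e^{2 pi i / r}.  r.-root (-1) is the r-th root of -1 of minimal
   nonnegative argument, i.e. e^{pi i / r} (and -1 for r = 1); its square is
   e^{2 pi i / r}. *)
Definition zeta (r : nat) : algC := (r.-root (-1)) ^+ 2.

Definition psi (p : nat) (x : 'F_p) : algC := zeta p ^+ (val x).

Definition gauss (p : nat) (f : 'F_p -> algC) : algC :=
  \sum_(x : 'F_p) f x * psi x.

Definition in_Qadj (alpha x : algC) : Prop :=
  exists a b : {poly rat},
    (map_poly ratr b).[alpha] != 0 /\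
    x = (map_poly ratr a).[alpha] / (map_poly ratr b).[alpha].

(* Main.v *)
Require Import Defs.
From HB Require Import structures.
From mathcomp Require Import all_boot all_order all_algebra all_field.
From mathcomp Require Import ring.
Import Order.TTheory GRing.Theory Num.Theory.
Local Open Scope ring_scope.

Lemma geom_sum (w : algC) (P : nat) : w ^+ P = 1 ->
  \sum_(t < P) w ^+ t = if w == 1 then P%:R else 0.
Proof.
move=> wP; case: eqP => [->|/eqP w1].
  by rewrite (eq_bigr (fun _ => 1)) ?sumr_const ?card_ord // => i _; rewrite expr1n.
have := subrX1 w P; rewrite wP subrr => /esym/eqP; rewrite mulf_eq0 subr_eq0 (negbTE w1) /=.
by move/eqP.
Qed.

Lemma root_norm1 {w : algC} {P : nat} : (0 < P)%N -> w ^+ P = 1 -> w * w^* = 1.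
Proof.
move=> P0 wP; rewrite -normCK.
have : `|w| ^+ P == 1 by rewrite -normrX wP normr1.
by rewrite pexpr_eq1 // => /eqP ->; rewrite expr1n.
Qed.


Lemma zeta_pow (r : nat) : (0 < r)%N -> zeta r ^+ r = 1.
Proof. by move=> r0; rewrite /zeta exprAC rootCK // sqrrN expr1n. Qed.

Lemma zeta_neq1 (r : nat) : (1 < r)%N -> zeta r != 1.
Proof.
move=> r1; rewrite /zeta sqrf_eq1 negb_or; apply/andP; split.
  apply/eqP=> h; have := @rootCK algC _ (ltnW r1) (-1); rewrite h expr1n => /eqP.
  by rewrite -subr_eq0 opprK -(natrD _ 1 1) pnatr_eq0.
by apply/eqP=> h; have := @rootC_lt0 algC _ (-1) r1; rewrite h ltrN10.
Qed.

Section Fp.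
Variable p : nat.
Hypothesis pr : prime p.

Lemma psi_p (x : 'F_p) : psi x ^+ p = 1.
Proof. by rewrite /psi exprAC zeta_pow ?prime_gt0 // expr1n. Qed.

Lemma psi0 : psi (0 : 'F_p) = 1.
Proof. by rewrite /psi /= expr0. Qed.

Lemma psiD (x y : 'F_p) : psi (x + y) = psi x * psi y.
Proof.
rewrite /psi -exprD /=.
have := Fp_cast pr; set m := (Zp_trunc (pdiv p)).+2 => hm.
have h : zeta p ^+ m = 1 by rewrite hm zeta_pow // prime_gt0.
exact: expr_mod.
Qed.

Lemma sum_psi : \sum_(x : 'F_p) psi x = 0.
Proof.
have := Fp_cast pr; set m := (Zp_trunc (pdiv p)).+2 => hm.
have -> : \sum_(x : 'F_p) psi x = \sum_(i < m) zeta p ^+ i by [].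
have h : zeta p ^+ m = 1 by rewrite hm zeta_pow // prime_gt0.
rewrite geom_sum // ifN // zeta_neq1 // prime_gt1 //.
Qed.

Lemma sum_corr (c : algC) :
  \sum_(h : 'F_p) (if h == 0 then (p - 1)%:R else c) = (p - 1)%:R + c *+ (p - 1).
Proof.
rewrite (bigD1 0) //=; congr (_ + _).
rewrite (eq_bigr (fun _ => c)); last by move=> i /negbTE ->.
by rewrite sumr_const cardC1 card_Fp // subn1.
Qed.

Lemma reindexD (g : 'F_p -> algC) (x : 'F_p) :
  \sum_(h : 'F_p) g (x + h) = \sum_(h : 'F_p) g h.
Proof. by rewrite [RHS](reindex_inj (addrI x)). Qed.

Lemma corr_sum0 (f : 'F_p -> algC) :
  (forall h : 'F_p,
     \sum_(x : 'F_p) f x * (f (x + h))^* =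
       (if h == 0 then (p - 1)%:R else -1)) ->
  \sum_(x : 'F_p) f x = 0.
Proof.
move=> hA.
have : \sum_(h : 'F_p) \sum_(x : 'F_p) f x * (f (x + h))^* = 0.
  rewrite (eq_bigr _ (fun h _ => hA h)) sum_corr.
  by rewrite mulNrn subrr.
rewrite exchange_big /=.
under eq_bigr => x _ do rewrite -mulr_sumr (reindexD (fun y => (f y)^*)).
rewrite -mulr_suml -rmorph_sum => /eqP; rewrite mul_conjC_eq0 => /eqP //.
Qed.

Lemma psi_norm (x : 'F_p) : psi x * (psi x)^* = 1.
Proof. exact: (root_norm1 (prime_gt0 pr) (psi_p x)). Qed.

Lemma gauss_norm (f : 'F_p -> algC) :
  (forall h : 'F_p,
     \sum_(x : 'F_p) f x * (f (x + h))^* =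
       (if h == 0 then (p - 1)%:R else -1)) ->
  gauss f * (gauss f)^* = p%:R.
Proof.
move=> hA; rewrite /gauss rmorph_sum mulr_suml.
under eq_bigr => x _ do rewrite mulr_sumr -(reindexD (fun y => f x * psi x * (f y * psi y)^*) x).
have e : forall x h : 'F_p, f x * psi x * (f (x + h) * psi (x + h))^* =
     (psi h)^* * (f x * (f (x + h))^*).
  move=> x h; rewrite psiD !rmorphM /=.
  have := psi_norm x; move: (psi x) (psi x)^* => a b ab.
  rewrite -[RHS]mulr1 -ab; ring.
under eq_bigr => x _ do under eq_bigr => h _ do rewrite e.
rewrite exchange_big /=.
under eq_bigr => h _ do rewrite -mulr_sumr hA.
have ifE : forall h : 'F_p, (if h == 0 then (p - 1)%:R else -1) =
   (if h == 0 then p%:R else 0) - 1 :> algC.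
  by move=> h; case: eqP => _; rewrite ?sub0r // natrB ?prime_gt0.
under eq_bigr => h _ do rewrite ifE mulrBr mulr1.
rewrite sumrB -rmorph_sum sum_psi rmorph0 subr0.
rewrite (bigD1 0) //= psi0 rmorph1 mul1r big1 ?addr0 // => h /negbTE ->.
by rewrite mulr0.
Qed.

End Fp.

Lemma aut_fix (u : {rmorphism algC -> algC}) (n t : nat) (zn a : algC) :
  zn ^+ n = 1 -> u zn = zn ^+ t -> (t %% n = 1 %% n)%N -> in_Qadj zn a -> u a = a.
Proof.
move=> hn hu ht [A [B [_ ->]]].
have uz : u zn = zn by rewrite hu -(expr_mod _ hn) ht (expr_mod _ hn) expr1.
have hp : forall C : {poly rat}, u (map_poly ratr C).[zn] = (map_poly ratr C).[zn].
  move=> C; rewrite -horner_map uz -map_poly_comp; congr (_.[_]).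
  by apply: eq_map_poly => c /=; rewrite fmorph_rat.
by rewrite fmorph_div /= !hp.
Qed.

Lemma main_identity (n P p k : nat) (I : finType) (A : pred I) (gam ps : I -> algC)
    (zn a : algC) :
  prime p -> P = (p ^ k)%N -> (0 < k)%N -> (1 < P)%N -> (0 < n)%N -> coprime n P ->
  zn ^+ n = 1 -> in_Qadj zn a ->
  (forall x, A x -> gam x ^+ (n * P) = 1) ->
  (forall x, ps x ^+ p = 1) ->
  a = \sum_(x | A x) gam x * ps x ->
  \sum_(x | A x) gam x = 0 ->
  forall t, coprime t p ->
  a = \sum_(x | A x) gam x ^+ (chinese n P 1 0) *
        ((gam x ^+ (chinese n P 0 1) * ps x) ^+ t - (gam x ^+ (chinese n P 0 1)) ^+ t).
Proof.
move=> pr PE k0 P1 n0 cnP hzn hQ hg hps ha hs t ct.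
set w0 := chinese n P 1 0; set w1 := chinese n P 0 1.
have w0n : (w0 %% n = 1 %% n)%N by apply: chinese_modl.
have w0P : (w0 %% P = 0)%N by rewrite /w0 chinese_modr // mod0n.
have w1n : (w1 %% n = 0)%N by rewrite /w1 chinese_modl // mod0n.
have w1P : (w1 %% P = 1)%N by rewrite /w1 chinese_modr // modn_small.
set t' := (w0 + t * w1)%N.
have t'n : (t' %% n = 1 %% n)%N by rewrite /t' -modnDm -modnMmr w1n muln0 mod0n addn0 modn_mod.
have t'P : (t' %% P = t %% P)%N by rewrite /t' -modnDm -modnMmr w1P muln1 w0P add0n modn_mod.
have ct' : coprime t' (n * P).
  rewrite coprimeMr -coprime_modl t'n coprime_modl coprime1n /=.
  rewrite -coprime_modl t'P coprime_modl.
  by rewrite PE coprimeXr.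
have pP : (p %| P)%N by rewrite PE -{1}(expn1 p) dvdn_exp2l.
have [u hu] := Qn_aut_exists ct'.
have t'E : t' = (w0 + t * w1)%N by [].
clearbody t' w0 w1.
have uz : u zn = zn ^+ t'.
  apply: hu; rewrite exprM hzn expr1n //.
have ua := @aut_fix u _ _ _ _ hzn uz t'n hQ.
have psN : forall x, ps x ^+ (n * P) = 1.
  by move=> x; rewrite -(expr_mod _ (hps x)) (eqP (dvdn_mull n pP)) expr0.
have ps0 : forall x, ps x ^+ w0 = 1.
  by move=> x; rewrite -(expr_mod _ (hps x)) -(modn_dvdm _ pP) w0P mod0n expr0.
have ps1 : forall x, ps x ^+ w1 = ps x.
  by move=> x; rewrite -(expr_mod _ (hps x)) -(modn_dvdm _ pP) w1P modn_small ?prime_gt1 // expr1.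
have h0 : \sum_(x | A x) u (gam x) = 0 by rewrite -rmorph_sum hs rmorph0.
transitivity (\sum_(x | A x) u (gam x * ps x) - \sum_(x | A x) u (gam x)).
  by rewrite h0 subr0 -rmorph_sum -ha ua.
rewrite -sumrB; apply: eq_bigr => x Ax.
rewrite rmorphM /= !hu ?hg ?psN //.
by rewrite t'E !exprD (mulnC t) !exprM ps0 ps1 mul1r exprMn mulrBr !mulrA.
Qed.

Lemma sum_t (P p : nat) (e ps : algC) : prime p -> (p %| P)%N ->
  e ^+ P = 1 -> ps ^+ p = 1 ->
  \sum_(t < P | coprime t p) ((e * ps) ^+ t - e ^+ t) =
  P%:R * (((e * ps) == 1)%:R - (e == 1)%:R).
Proof.
move=> pr pP eP psp.
have psP : ps ^+ P = 1 by rewrite -(expr_mod _ psp) (eqP pP) expr0.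
have -> : \sum_(t < P | coprime t p) ((e * ps) ^+ t - e ^+ t) =
          \sum_(t < P) ((e * ps) ^+ t - e ^+ t).
  rewrite [RHS](bigID (fun t : 'I_P => coprime t p)) /= [X in _ = _ + X]big1 ?addr0 //.
  move=> t; rewrite coprime_sym prime_coprime // negbK => dt.
  by rewrite exprMn -(expr_mod _ psp) (eqP dt) expr0 mulr1 subrr.
rewrite sumrB !geom_sum ?exprMn ?eP ?psP ?mulr1 //.
by case: (e * ps == 1); case: (e == 1); rewrite /= ?subrr ?mulr0 ?mulr1 ?sub0r ?subr0 ?mulrN ?mulrBr ?mulr1 ?mulr0.
Qed.

Lemma card_cop (P p k : nat) : prime p -> P = (p ^ k)%N -> (0 < k)%N ->
  #|[pred t : 'I_P | coprime t p]| = totient P.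
Proof.
move=> pr PE k0.
have cE : forall i, coprime P i = coprime i p.
  by move=> i; rewrite PE coprime_pexpl // coprime_sym.
rewrite totient_count_coprime big_mkord -sum1_card big_mkcond /=.
by apply: eq_bigr => i _; rewrite inE cE; case: (coprime i p).
Qed.

Lemma key (n P p k : nat) (I : finType) (A : pred I) (gam ps : I -> algC)
    (zn a : algC) :
  prime p -> P = (p ^ k)%N -> (0 < k)%N -> (1 < P)%N -> (0 < n)%N -> coprime n P ->
  zn ^+ n = 1 -> in_Qadj zn a ->
  (forall x, A x -> gam x ^+ (n * P) = 1) ->
  (forall x, ps x ^+ p = 1) ->
  a = \sum_(x | A x) gam x * ps x ->
  \sum_(x | A x) gam x = 0 ->
  exists2 b, b \in Aint & (totient P)%:R * a = P%:R * b.
Proof.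
move=> pr PE k0 P1 n0 cnP hzn hQ hg hps ha hs.
have hid := @main_identity n P p k I A gam ps zn a pr PE k0 P1 n0 cnP hzn hQ hg hps ha hs.
set w0 := chinese n P 1 0 in hid; set w1 := chinese n P 0 1 in hid.
have w1n : (w1 %% n = 0)%N by rewrite /w1 chinese_modl // mod0n.
have pP : (p %| P)%N by rewrite PE -{1}(expn1 p) dvdn_exp2l.
exists (\sum_(x | A x) gam x ^+ w0 *
          ((gam x ^+ w1 * ps x == 1)%:R - (gam x ^+ w1 == 1)%:R)).
  apply: rpred_sum => x Ax; apply: rpredM; last by apply: rpredB; apply: Aint_Cnat; apply: rpred_nat.
  apply: rpredX; apply: (@Aint_unity_root (n * P)); first by rewrite muln_gt0 n0 ltnW.
  by rewrite unity_rootE hg.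
have -> : (totient P)%:R * a = \sum_(t < P | coprime t p) a.
  rewrite (eq_bigl (fun t => t \in [pred t : 'I_P | coprime t p])) //.
  by rewrite sumr_const (@card_cop P p k pr PE k0) mulr_natl.
rewrite (eq_bigr (fun t : 'I_P => \sum_(x | A x) gam x ^+ w0 *
        ((gam x ^+ w1 * ps x) ^+ t - (gam x ^+ w1) ^+ t)) (fun t ct => hid t ct)).
rewrite exchange_big /= mulr_sumr.
apply: eq_bigr => x Ax; rewrite -mulr_sumr sum_t //; first by rewrite mulrCA.
by rewrite -exprM -(expr_mod _ (hg x Ax)) -muln_modl w1n mul0n expr0.
Qed.

From mathcomp Require Import zify.

Lemma int_contra (p : nat) (m : int) : (2 < p)%N -> p%:Z * m = ((p - 1) ^ 2)%:Z -> False.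
Proof.
move=> hp h.
have [hm|hm] := lerP m (p%:Z - 2).
  have : (p%:Z * m <= p%:Z * (p%:Z - 2))%R by rewrite ler_wpM2l.
  lia.
have hm' : (p%:Z - 1 <= m)%R by lia.
have : (p%:Z * (p%:Z - 1) <= p%:Z * m)%R by rewrite ler_wpM2l.
nia.
Qed.

Theorem lemma4 (p n k : nat) (f : 'F_p -> algC) :
  prime p -> odd p -> (0 < n)%N -> coprime n p -> (1 <= k)%N ->
  f 0 = 0 ->
  (forall x : 'F_p, x != 0 -> f x ^+ (n * p ^ k) = 1) ->
  (forall h : 'F_p,
     \sum_(x : 'F_p) f x * (f (x + h))^* =
       (if h == 0 then (p - 1)%:R else -1)) ->
  ~ (exists s : int, in_Qadj (zeta n) (zeta (p ^ k) ^ s * gauss f)).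
Proof.
move=> pr po n0 cnp k0 f0 hf hA [s hQ].
set P := (p ^ k)%N.
have PE : P = (p ^ k)%N by [].
have P1 : (1 < P)%N by rewrite /P -(expn0 p) ltn_exp2l // prime_gt1.
have cnP : coprime n P by rewrite /P coprimeXr.
set z := zeta P.
have zP : z ^+ P = 1 by rewrite zeta_pow // ltnW.
have zsP : (z ^ s) ^+ P = 1 by rewrite exprnP exprzAC -exprnP zP exp1rz.
have zsN : (z ^ s) ^+ (n * P) = 1 by rewrite mulnC exprM zsP expr1n.
have gE : gauss f = \sum_(x | x != 0) f x * psi x.
  by rewrite /gauss (bigD1 0) //= f0 mul0r add0r.
have sf : \sum_(x | x != 0) f x = 0.
  by have := @corr_sum0 p pr f hA; rewrite (bigD1 0) //= f0 add0r.
have hg : forall x : 'F_p, x != 0 -> (z ^ s * f x) ^+ (n * P) = 1.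
  by move=> x hx; rewrite exprMn zsN hf // mulr1.
have ha : z ^ s * gauss f = \sum_(x | x != 0) (z ^ s * f x) * psi x.
  by rewrite gE mulr_sumr; apply: eq_bigr => x _; rewrite mulrA.
have hs : \sum_(x | x != 0) (z ^ s * f x) = 0 by rewrite -mulr_sumr sf mulr0.
have [b bA hb] := @key n P p k _ (fun x => x != 0) (fun x => z ^ s * f x) (@psi p)
   (zeta n) (z ^ s * gauss f) pr PE k0 P1 n0 cnP (@zeta_pow n n0) hQ hg
   (@psi_p p pr) ha hs.
move: hb; set a := z ^ s * gauss f => hb.
have aa : a * a^* = p%:R.
  rewrite rmorphM /= mulrACA (root_norm1 (ltnW P1) zsP) mul1r.
  exact: (@gauss_norm p pr f hA).
clearbody a.
have p0 : (p%:R : algC) != 0 by rewrite pnatr_eq0 -lt0n prime_gt0.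
have q0 : ((p ^ k.-1)%N%:R : algC) != 0 by rewrite pnatr_eq0 -lt0n expn_gt0 prime_gt0.
have h1 : p.-1%:R * a = p%:R * b.
  apply: (mulfI q0); move: hb; rewrite (totient_pfactor pr k0) PE -{2}(prednK k0) expnS.
  rewrite !natrM => hb; rewrite mulrA (mulrC _ (p.-1%:R)) hb; ring.
have h2 : p.-1%:R ^+ 2 * p%:R = p%:R ^+ 2 * (b * b^*) :> algC.
  rewrite -{1}aa; transitivity ((p.-1%:R * a) * (p.-1%:R * a)^*).
    by rewrite rmorphM /= conjC_nat; ring.
  by rewrite h1 rmorphM /= conjC_nat; ring.
have zA : b * b^* \in Aint by rewrite rpredM // Aint_aut.
have zE : b * b^* = p.-1%:R ^+ 2 / p%:R.
  have h3 : p.-1%:R ^+ 2 = p%:R * (b * b^*) by apply: (mulIf p0); rewrite h2; ring.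
  by rewrite h3 [RHS]mulrC mulKf.
have zQ : b * b^* \in Crat by rewrite zE rpred_div ?rpredX ?rpred_nat.
have /intrP [m hm] := Cint_rat_Aint zQ zA.
have p2 : (2 < p)%N.
  case: (ltngtP 2 p) => // [hp|hp]; first by have := prime_gt1 pr; lia.
  by move: po; rewrite -hp.
apply: (@int_contra p m p2).
apply: (@intr_inj algC); rewrite intrM /= -hm.
by rewrite -!pmulrn zE mulrC divfK // subn1 natrX.
Qed.
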